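(* Let $u\in\mathcal{B}^N$, $m\in\mathbb{R}$, $\varepsilon>0$, $(r,\sigma)\in F(N,A,u,m)$ and $(t,\sigma)\in F(N,A,u,m-\varepsilon)$ such that $r_a>t_a$ for each $a\in A$. Suppose there is no $i\in N$ and $a\in A$ with $r_a>b_i>t_a$. Then $\sigma$ is a minimum weight perfect matching in $\mathcal{F}^u_\kappa(t)$.
   Context: Fix a finite set $\{\rho_1,\dots,\rho_k\}\subseteq\mathbb{R}_+$ with $\rho_1=0$. $N=\{1,\dots,n\}$ agents, $A$ a set of $n$ rooms. $\mathcal{B}$ is the set of utility functions $u_i(r_a,a)=v^i_a-r_a-\rho_i\max\{0,r_a-b_i\}$ with $v^i\in\mathbb{R}^A$, $b_i\ge0$, $\rho_i\in\{\rho_1,\dots,\rho_k\}$. An allocation for $(N,A,u,m)$ is $(r,\sigma)$ with $\sigma:N\to A$ a bijection, $r\in\mathbb{R}^A$, $\sum_ar_a=m$; envy-free means $u_i(r_{\sigma(i)},\sigma(i))\ge u_i(r_{\sigma(j)},\sigma(j))$ for all $i,j$; $F(N,A,u,m)$ is the set of envy-free allocations. $\kappa_{ia}(u,t)=1+\rho_i$ if $t_a\ge b_i$ and $1$ otherwise (absolute marginal disutility of an increase of rent of room $a$ at $t$). For $t$ with some envy-free $(t,\sigma)$, $\mathcal{F}(t)$ is the bipartite graph on $N\cup A$ with edge $(i,a)$ iff $u_i(t_{\sigma(i)},\sigma(i))=u_i(t_a,a)$, and $\mathcal{F}^u_\kappa(t)$ has weights $w(i,a)=\log\kappa_{ia}(u,t)$;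 a minimum weight perfect matching is a bijection $\mu:N\to A$ using only edges of $\mathcal{F}(t)$ minimizing $\sum_iw(i,\mu(i))$ among such. *)

(* Defs.v *)
From HB Require Import structures.
From mathcomp Require Import all_boot all_order all_algebra.
From mathcomp Require Import all_classical all_reals all_analysis.
Set Implicit Arguments. Unset Strict Implicit. Unset Printing Implicit Defensive.
Import Order.TTheory GRing.Theory Num.Theory.
Local Open Scope ring_scope.

(* Agents N = 'I_n, rooms A : finType with #|A| = n.
   A utility profile u in B^N is given by v i a (= v^i_a), b i, rho i. *)

Section Defs.
Variables (R : realType) (n : nat) (A : finType).
Variables (v : 'I_n -> A -> R) (b : 'I_n -> R) (rho : 'I_n -> R).

Definition util (i : 'I_n) (x : R) (a : A) : R :=
  v i a - x - rho i * Num.max 0 (x - b i).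

Definition allocation (m : R) (r : A -> R) (sigma : 'I_n -> A) : Prop :=
  bijective sigma /\ \sum_(a : A) r a = m.

Definition envy_free (m : R) (r : A -> R) (sigma : 'I_n -> A) : Prop :=
  allocation m r sigma /\
  forall i j : 'I_n, util i (r (sigma j)) (sigma j) <= util i (r (sigma i)) (sigma i).

Definition kappa (t : A -> R) (i : 'I_n) (a : A) : R :=
  if b i <= t a then 1 + rho i else 1.

Definition Fedge (t : A -> R) (sigma : 'I_n -> A) (i : 'I_n) (a : A) : Prop :=
  util i (t (sigma i)) (sigma i) = util i (t a) a.

Definition weight (t : A -> R) (i : 'I_n) (a : A) : R := ln (kappa t i a).

Definition perfect_matching (t : A -> R) (sigma mu : 'I_n -> A) : Prop :=
  bijective mu /\ forall i, Fedge t sigma i (mu i).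

Definition min_weight_pm (t : A -> R) (sigma mu : 'I_n -> A) : Prop :=
  perfect_matching t sigma mu /\
  forall mu' : 'I_n -> A, perfect_matching t sigma mu' ->
    \sum_(i < n) weight t i (mu i) <= \sum_(i < n) weight t i (mu' i).
End Defs.

(* Main.v *)
Require Import Defs.
From HB Require Import structures.
From mathcomp Require Import all_boot all_order all_algebra.
From mathcomp Require Import all_classical all_reals all_analysis.
From mathcomp Require Import ring lra.
Import Order.TTheory GRing.Theory Num.Theory.
Local Open Scope ring_scope.

Theorem lemma7 (R : realType) (rhos : seq R)
    (hrhos0 : head 1 rhos = 0) (hrhos : all (fun x => 0 <= x) rhos)
    (n : nat) (A : finType) (hA : #|A| = n)
    (v : 'I_n -> A -> R) (b : 'I_n -> R) (rho : 'I_n -> R)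
    (hb : forall i, 0 <= b i) (hrho : forall i, rho i \in rhos)
    (m eps : R) (heps : 0 < eps) (r t : A -> R) (sigma : 'I_n -> A)
    (hr : envy_free v b rho m r sigma)
    (ht : envy_free v b rho (m - eps) t sigma)
    (hrt : forall a, t a < r a)
    (hno : ~ (exists (i : 'I_n) (a : A), t a < b i /\ b i < r a)) :
  min_weight_pm v b rho t sigma sigma.
Proof.
have rho0 : forall i, 0 <= rho i by move=> i; exact: (allP hrhos _ (hrho i)).
have kpos : forall i a, 0 < kappa b rho t i a.
  by move=> i a; rewrite /kappa; case: ifP => _ //; have := rho0 i; lra.
have key : forall i a, util v b rho i (r a) a
    = util v b rho i (t a) a - kappa b rho t i a * (r a - t a).
  move=> i a; rewrite /util /kappa; have := hrt a => hta.
  case: ifP => hbt.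
    rewrite !max_r; first (rewrite mulrDl; ring).
    - by move: hbt; rewrite subr_ge0.
    - by rewrite subr_ge0; apply: (le_trans hbt); exact: ltW.
  have hbt' : t a < b i by rewrite ltNge hbt.
  have hrb : r a <= b i.
    by rewrite leNgt; apply/negP => h; apply: hno; exists i, a.
  rewrite !max_l; first ring.
  - by rewrite subr_le0; exact: ltW.
  - by rewrite subr_le0.
have [[bs _] efr] := hr.
split; first by split => //.
move=> mu [bmu hmu].
have dpos : forall a, 0 < r a - t a by move=> a; rewrite subr_gt0.
have step : forall i, ln (kappa b rho t i (sigma i)) + ln (r (sigma i) - t (sigma i))
    <= ln (kappa b rho t i (mu i)) + ln (r (mu i) - t (mu i)).
  move=> i; rewrite -!lnM ?posrE //.
  rewrite ler_ln ?posrE ?mulr_gt0 //.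
  have [g gK Kg] := bs.
  have := efr i (g (mu i)); rewrite Kg !key -(hmu i) /Fedge.
  lra.
have : \sum_(i < n) (ln (kappa b rho t i (sigma i)) + ln (r (sigma i) - t (sigma i)))
    <= \sum_(i < n) (ln (kappa b rho t i (mu i)) + ln (r (mu i) - t (mu i))).
  by apply: ler_sum => i _; exact: step.
rewrite !big_split /=.
have -> : \sum_(i < n) ln (r (mu i) - t (mu i)) = \sum_(i < n) ln (r (sigma i) - t (sigma i)).
  have e1 := @reindex R +%R 0 A 'I_n mu xpredT (fun a => ln (r a - t a)) (onW_bij _ bmu).
  have e2 := @reindex R +%R 0 A 'I_n sigma xpredT (fun a => ln (r a - t a)) (onW_bij _ bs).
  transitivity (\sum_(a : A) ln (r a - t a)); [exact: (esym e1) | exact: e2].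
by rewrite lerD2r.
Qed.
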